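(* Let $s_1,\dots,s_N\subseteq\mathcal{H}$ be mutually orthogonal nonzero subspaces, and let $\mathbb{Q}$ be the collection of all $N$-tuples $(\sigma'_1,\dots,\sigma'_N)$ of density matrices on $\mathcal{H}$ such that for every $i$ the support of $\sigma'_i$ equals $s_i$ (i.e. $\sigma'_i$ is supported in $s_i$ and $\mathrm{rank}(\sigma'_i)=\dim s_i$). Then either every tuple in $\mathbb{Q}$ is perfectly distinguishable by LOCC, or no tuple in $\mathbb{Q}$ is. Furthermore, if they are perfectly distinguishable by LOCC, there exists a single LOCC-implementable (in particular separable) POVM $\Pi_{\mathbb{Q}}=\{\Pi_1,\dots,\Pi_N\}$ such that $\mathrm{Tr}(\Pi_i\sigma'_j)=\delta_{ij}$ for every tuple $(\sigma'_1,\dots,\sigma'_N)\in\mathbb{Q}$.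
   Context: $\mathcal{H}=\mathcal{H}_1\otimes\cdots\otimes\mathcal{H}_m$ is a finite-dimensional Hilbert space of a composite system shared by $m$ spatially separated parties. A set of density matrices $\{\sigma_1,\dots,\sigma_N\}$ is perfectly distinguishable by LOCC if there is a protocol using local operations and classical communication which, applied to an unknown $\sigma_j$ from the set, outputs $j$ with probability $1$; equivalently, there exists a POVM $\{\Pi_1,\dots,\Pi_N\}$ implementable by LOCC with $\mathrm{Tr}(\Pi_i\sigma_j)=\delta_{ij}$. The support of a density matrix is the span of its eigenvectors with nonzero eigenvalues. A POVM is separable if each element is a nonnegative combination of tensor products of positive semidefinite operators on the factors $\mathcal{H}_k$. *)

(* Defs.v *)
(* Finite-dimensional quantum systems over an arbitrary
   numClosedFieldType C (the complex numbers being the intended instance). *)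
From HB Require Import structures.
From mathcomp Require Import all_boot all_order all_algebra.
Set Implicit Arguments. Unset Strict Implicit. Unset Printing Implicit Defensive.
Import Order.TTheory GRing.Theory Num.Theory.
Local Open Scope ring_scope.

(* Composite system: m parties, party k has local dimension d k.
   The computational basis of H = H_1 (x) ... (x) H_m is indexed by tuples. *)
Definition idx (m : nat) (d : 'I_m -> nat) : finType :=
  {dffun forall k : 'I_m, 'I_(d k)}.

Definition hdim (m : nat) (d : 'I_m -> nat) : nat := #|idx d|.

Definition adj (C : numClosedFieldType) (p q : nat) (A : 'M[C]_(p, q)) : 'M[C]_(q, p) :=
  (map_mx (fun z => z^*) A)^T.

Definition psd (C : numClosedFieldType) (n : nat) (A : 'M[C]_n) : Prop :=
  adj A = A /\ forall v : 'cV[C]_n, 0 <= (adj v *m A *m v) 0 0.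

Definition density (C : numClosedFieldType) (n : nat) (A : 'M[C]_n) : Prop :=
  psd A /\ \tr A = 1.

(* Subspaces of H are represented by matrices via their row space (%MS).
   support A := the range (column space) of A, as a row space. *)
Definition support (C : numClosedFieldType) (n : nat) (A : 'M[C]_n) : 'M[C]_n := A^T.

Definition supp_eq (C : numClosedFieldType) (n : nat) (A s : 'M[C]_n) : Prop :=
  (support A <= s)%MS /\ \rank (support A) = \rank s.

Definition upd (m : nat) (d : 'I_m -> nat) (k : 'I_m) (e : nat) : 'I_m -> nat :=
  fun l => if l == k then e else d l.

Lemma upd_k (m : nat) (d : 'I_m -> nat) (k : 'I_m) (e : nat) : upd d k e k = e.
Proof. by rewrite /upd eqxx. Qed.

(* K (x) Id : H -> H', for a local Kraus operator K : H_k -> C^e of party k *)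
Definition liftop (C : numClosedFieldType) (m : nat) (d : 'I_m -> nat) (k : 'I_m)
  (e : nat) (K : 'M[C]_(e, d k)) : 'M[C]_(hdim (upd d k e), hdim d) :=
  \matrix_(i, j)
    (K (cast_ord (upd_k d k e) ((enum_val i : idx (upd d k e)) k))
       ((enum_val j : idx d) k)
     * \prod_(l < m | l != k)
         (nat_of_ord ((enum_val i : idx (upd d k e)) l)
            == nat_of_ord ((enum_val j : idx d) l))%:R).

(* At a leaf the parties announce a guess in 'I_N.  At a node,
   party k performs a local measurement (instrument) with Kraus operators
   K 0, ..., K (r-1) from its current system (dim d k) to a new system of
   dimension e; the outcome is broadcast (classical communication) and the
   protocol continues with the sub-protocol chosen by the outcome. *)
Inductive prot (C : numClosedFieldType) (m N : nat) : ('I_m -> nat) -> Type :=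
| PLeaf (d : 'I_m -> nat) : 'I_N -> prot C N d
| PNode (d : 'I_m -> nat) (k : 'I_m) (e r : nat) (K : 'I_r -> 'M[C]_(e, d k)) :
    (forall i : 'I_r, prot C N (upd d k e)) -> prot C N d.

Fixpoint valid (C : numClosedFieldType) (m N : nat) (d : 'I_m -> nat)
  (P : prot C N d) {struct P} : Prop :=
  match P with
  | PLeaf _ _ => True
  | PNode d k e r K ch =>
      \sum_(i < r) adj (K i) *m K i = 1%:M /\ forall i, valid (ch i)
  end.

Fixpoint povm (C : numClosedFieldType) (m N : nat) (d : 'I_m -> nat)
  (P : prot C N d) (o : 'I_N) {struct P} : 'M[C]_(hdim d) :=
  match P with
  | PLeaf d i => ((i == o)%:R)%:M
  | PNode d k e r K ch =>
      \sum_(i < r) adj (liftop (K i)) *m povm (ch i) o *m liftop (K i)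
  end.

Definition pdist (C : numClosedFieldType) (m N : nat) (d : 'I_m -> nat)
  (P : prot C N d) (sigma : 'I_N -> 'M[C]_(hdim d)) : Prop :=
  forall i j : 'I_N, \tr (povm P i *m sigma j) = (i == j)%:R.

Definition LOCC_dist (C : numClosedFieldType) (m N : nat) (d : 'I_m -> nat)
  (sigma : 'I_N -> 'M[C]_(hdim d)) : Prop :=
  exists P : prot C N d, valid P /\ pdist P sigma.

Definition inQ (C : numClosedFieldType) (m N : nat) (d : 'I_m -> nat)
  (s sigma : 'I_N -> 'M[C]_(hdim d)) : Prop :=
  forall i, density (sigma i) /\ supp_eq (sigma i) (s i).

(* Main.v *)
Require Import Defs.
From HB Require Import structures.
From mathcomp Require Import all_boot all_order all_algebra.
From mathcomp Require Import ring.
From Stdlib Require Import Classical.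
Set Implicit Arguments. Unset Strict Implicit. Unset Printing Implicit Defensive.
Import Order.TTheory GRing.Theory Num.Theory.
Local Open Scope ring_scope.

Section A.
Variable C : numClosedFieldType.

Lemma adjE p q (A : 'M[C]_(p,q)) i j : adj A i j = (A j i)^*.
Proof. by rewrite /adj !mxE. Qed.

Lemma adjK p q (A : 'M[C]_(p,q)) : adj (adj A) = A.
Proof. by apply/matrixP=> i j; rewrite !adjE conjCK. Qed.

Lemma adj_mul p q r (A : 'M[C]_(p,q)) (B : 'M[C]_(q,r)) : adj (A *m B) = adj B *m adj A.
Proof.
apply/matrixP=> i j; rewrite adjE !mxE rmorph_sum; apply: eq_bigr => k _.
by rewrite !adjE rmorphM mulrC.
Qed.

Lemma adjD p q (A B : 'M[C]_(p,q)) : adj (A + B) = adj A + adj B.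
Proof. by apply/matrixP=> i j; rewrite !mxE rmorphD. Qed.

Lemma adj_sum p q I (r : seq I) (P : pred I) (F : I -> 'M[C]_(p,q)) :
  adj (\sum_(i <- r | P i) F i) = \sum_(i <- r | P i) adj (F i).
Proof.
apply/matrixP=> i j; rewrite adjE !summxE rmorph_sum; apply: eq_bigr => k _.
by rewrite adjE.
Qed.

Lemma adjZ p q a (A : 'M[C]_(p,q)) : adj (a *: A) = a^* *: adj A.
Proof. by apply/matrixP=> i j; rewrite !mxE rmorphM. Qed.

Lemma adj_scalar n (a : C) : adj (a%:M : 'M_n) = (a^*)%:M.
Proof. by apply/matrixP=> i j; rewrite adjE !mxE eq_sym; case: eqP; rewrite ?mulr1n ?mulr0n ?rmorph0. Qed.


Lemma adjvv_ge0 n (w : 'cV[C]_n) : 0 <= (adj w *m w) 0 0.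
Proof.
rewrite mxE; apply: sumr_ge0 => k _; rewrite adjE -normCKC; exact: exprn_ge0.
Qed.

Lemma adjvv_eq0 n (w : 'cV[C]_n) : (adj w *m w) 0 0 = 0 -> w = 0.
Proof.
rewrite mxE => H; apply/matrixP=> k j; rewrite (ord1 j) mxE.
have hp : forall i : 'I_n, true -> 0 <= adj w 0 i * w i 0.
  move=> i _; rewrite adjE -normCKC; exact: exprn_ge0.
have := psumr_eq0P hp H (i := k) isT; rewrite adjE -normCKC => /eqP.
by rewrite expf_eq0 /= normr_eq0 => /eqP.
Qed.

Lemma eD p q (A B : 'M[C]_(p,q)) i j : (A + B) i j = A i j + B i j.
Proof. by rewrite mxE. Qed.
Lemma eN p q (A : 'M[C]_(p,q)) i j : (- A) i j = - A i j.
Proof. by rewrite mxE. Qed.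
Lemma eZ p q x (A : 'M[C]_(p,q)) i j : (x *: A) i j = x * A i j.
Proof. by rewrite mxE. Qed.

Lemma psd_ker n (S : 'M[C]_n) (v : 'cV[C]_n) :
  psd S -> (adj v *m S *m v) 0 0 = 0 -> S *m v = 0.
Proof.
move=> [hS pS] H0.
set w := S *m v.
set a := (adj w *m w) 0 0.
set b := (adj w *m S *m w) 0 0.
have a0 : 0 <= a by exact: adjvv_ge0.
have b0 : 0 <= b by exact: pS.
have aw : adj w = adj v *m S by rewrite /w adj_mul hS.
have e1 : (adj v *m S *m w) 0 0 = a by rewrite /a aw.
have e2 : (adj w *m S *m v) 0 0 = a by rewrite /a -mulmxA.
set u := (b + 1) *: v - a *: w.
have := pS u.
have -> : adj u = (b + 1) *: adj v - a *: adj w.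
  by rewrite /u adjD -scaleN1r adjZ !adjZ rmorphN1 scaleN1r geC0_conj ?addr_ge0 // geC0_conj.
rewrite /u !(mulmxDl, mulmxDr, mulmxN, mulNmx) -!scalemxAl -!scalemxAr -?scalemxAl -?scalemxAr -?scalemxAl.
rewrite !(eD, eN, eZ) H0 e1 e2 -/b.
have -> : (b + 1) * ((b + 1) * 0) - a * ((b + 1) * a) +
  (- ((b + 1) * (a * a)) - - (a * (a * b)))
   = - ((a * a) * (b + 2)) by ring.
rewrite oppr_ge0 => H.
have : a * a <= 0.
  rewrite -(pmulr_lle0 _ (_ : 0 < b + 2)) //.
  by apply: ltr_wpDl.
move=> aa; have : a * a == 0 by rewrite eq_le aa mulr_ge0.
rewrite mulf_eq0 orbb => /eqP; exact: adjvv_eq0.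
Qed.

Lemma psd_conj n p (L : 'M[C]_(p,n)) S : psd S -> psd (L *m S *m adj L).
Proof.
move=> [hS pS]; split.
  by rewrite !adj_mul adjK hS mulmxA.
move=> v; have := pS (adj L *m v).
by rewrite adj_mul adjK !mulmxA.
Qed.

Lemma diag_form n (S : 'M[C]_n) (i : 'I_n) :
  (adj (delta_mx i 0 : 'cV[C]_n) *m S *m (delta_mx i 0 : 'cV[C]_n)) 0 0 = S i i.
Proof.
have -> : adj (delta_mx i 0 : 'cV[C]_n) = (delta_mx 0 i : 'rV[C]_n).
  apply/matrixP=> a b; rewrite adjE !mxE.
  by case: (_ == _); case: (_ == _); rewrite /= ?rmorph1 ?rmorph0.
by rewrite -rowE -colE !mxE.
Qed.

Lemma tr_psd_ge0 n (S : 'M[C]_n) : psd S -> 0 <= \tr S.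
Proof.
move=> [_ pS]; rewrite /mxtrace; apply: sumr_ge0 => i _.
by rewrite -diag_form.
Qed.

Lemma tr_psd_eq0 n (S : 'M[C]_n) : psd S -> \tr S = 0 -> S = 0.
Proof.
move=> hS tr0.
have hp : forall i : 'I_n, true -> 0 <= S i i.
  by move=> i _; rewrite -diag_form; case: hS.
apply/matrixP => a b; rewrite mxE.
have := psd_ker hS (v := delta_mx b 0).
rewrite diag_form (psumr_eq0P hp tr0) // => /(_ erefl) /matrixP /(_ a 0).
by rewrite -colE !mxE.
Qed.

Definition hker n (S S' : 'M[C]_n) := forall r : 'rV[C]_n, r *m S = 0 -> r *m S' = 0.

Lemma hker0 n (S' : 'M[C]_n) : hker 0 S' -> S' = 0.
Proof.
move=> h; apply/matrixP=> a b.
have := h (delta_mx 0 a); rewrite mulmx0 -rowE => /(_ erefl) /matrixP /(_ 0 b).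
by rewrite !mxE.
Qed.

Lemma hker_conj n p (L : 'M[C]_(p,n)) S S' : psd S -> hker S S' ->
  hker (L *m S *m adj L) (L *m S' *m adj L).
Proof.
move=> hS h r H.
have e : (adj (adj L *m adj r) *m S *m (adj L *m adj r)) 0 0 = 0.
  rewrite adj_mul !adjK !mulmxA.
  have -> : r *m L *m S *m adj L = r *m (L *m S *m adj L) by rewrite !mulmxA.
  by rewrite H !mul0mx mxE.
have := psd_ker hS e => /(congr1 (@adj _ _ _)).
rewrite adj_mul adj_mul !adjK (proj1 hS) => e2.
have : (r *m L) *m S = 0.
  have -> : r *m L *m S = adj (0 : 'cV[C]_n).
    exact e2.
  by apply/matrixP=> a b; rewrite adjE !mxE rmorph0.
by move/h; rewrite !mulmxA => ->; rewrite !mul0mx.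
Qed.
End A.

Lemma tr_sum (C : numClosedFieldType) n I (r : seq I) (P : pred I) (F : I -> 'M[C]_n) :
  \tr (\sum_(i <- r | P i) F i) = \sum_(i <- r | P i) \tr (F i).
Proof. by rewrite raddf_sum. Qed.

Lemma tr_conj (C : numClosedFieldType) n p (L : 'M[C]_(p,n)) (Pi : 'M[C]_p) S :
  \tr (adj L *m Pi *m L *m S) = \tr (Pi *m (L *m S *m adj L)).
Proof. by rewrite -!mulmxA mxtrace_mulC !mulmxA. Qed.

Lemma povm_tr_ge0 (C : numClosedFieldType) m N (d : 'I_m -> nat) (P : prot C N d) o :
  forall S, psd S -> 0 <= \tr (povm P o *m S).
Proof.
elim: P => [d' i | d' k e r K ch IH] S hS /=.
  by rewrite mul_scalar_mx mxtraceZ mulr_ge0 ?ler0n ?tr_psd_ge0.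
rewrite mulmx_suml tr_sum; apply: sumr_ge0 => i _.
by rewrite tr_conj; apply: IH; apply: psd_conj.
Qed.

Lemma povm_zero (C : numClosedFieldType) m N (d : 'I_m -> nat) (P : prot C N d) o :
  forall S S', psd S -> hker S S' -> \tr (povm P o *m S) = 0 -> \tr (povm P o *m S') = 0.
Proof.
elim: P => [d' i | d' k e r K ch IH] S S' hS hk /=.
  rewrite !mul_scalar_mx !mxtraceZ => /eqP; rewrite mulf_eq0 => /orP [/eqP -> | /eqP t0].
    by rewrite mul0r.
  by move: hk; rewrite (tr_psd_eq0 hS t0) => /hker0 ->; rewrite mxtrace0 mulr0.
rewrite !mulmx_suml !tr_sum => H.
have hp : forall i : 'I_r, true -> 0 <= \tr (adj (liftop (K i)) *m povm (ch i) o *m liftop (K i) *m S).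
  by move=> i _; rewrite tr_conj; apply: povm_tr_ge0; apply: psd_conj.
apply: big1 => i _; rewrite tr_conj.
apply: (IH i (liftop (K i) *m S *m adj (liftop (K i)))).
- exact: psd_conj.
- exact: hker_conj.
by rewrite -tr_conj (psumr_eq0P hp H).
Qed.
Section Lift.
Variables (C : numClosedFieldType) (m : nat) (d : 'I_m -> nat) (k : 'I_m) (e : nat).

Definition agree (f g : 'I_m -> nat) := [forall l, (l != k) ==> (f l == g l)].

Lemma prod_agree (f g : 'I_m -> nat) :
  \prod_(l < m | l != k) ((f l == g l)%:R : C) = (agree f g)%:R.
Proof.
case: (boolP (agree f g)) => [/forallP H | /forallP H].
  by rewrite big1 // => l lk; have := H l; rewrite lk /= => ->.
have [l] : exists l, ~~ ((l != k) ==> (f l == g l)).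
  by apply/existsP; rewrite -negb_forall; apply/forallP.
rewrite negb_imply => /andP [lk /negbTE fl].
by rewrite (bigD1 l) //= fl mul0r.
Qed.

Definition mkv (a : nat) (y : idx d) (l : 'I_m) : nat := if l == k then a else y l.
Lemma mk_lt (a : 'I_e) (y : idx d) (l : 'I_m) : (mkv a y l < upd d k e l)%N.
Proof. by rewrite /mkv /upd; case: (l == k). Qed.
Definition mk (y : idx d) (a : 'I_e) : idx (upd d k e) :=
  @finfun _ (fun l => 'I_(upd d k e l)) (fun l => Ordinal (mk_lt a y l)).
Definition cx (x : idx (upd d k e)) : 'I_e := cast_ord (upd_k d k e) (x k).

Lemma mkE (y : idx d) (a : 'I_e) l : nat_of_ord (mk y a l) = mkv a y l.
Proof. by rewrite /mk ffunE. Qed.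

Lemma cx_mk (y : idx d) (a : 'I_e) : cx (mk y a) = a.
Proof. by apply: val_inj; rewrite /cx /= mkE /mkv eqxx. Qed.

Lemma mk_cx (y : idx d) (x : idx (upd d k e)) : agree (fun l => x l) (fun l => y l) -> mk y (cx x) = x.
Proof.
move=> /forallP H; apply/ffunP => l; apply: val_inj; rewrite /= mkE /mkv.
case: (eqVneq l k) => [-> | lk]; first by [].
by have := H l; rewrite lk /= => /eqP.
Qed.

Lemma agree_mk (y y' : idx d) (a : 'I_e) :
  agree (fun l => mk y a l) (fun l => y' l) = agree (fun l => y l) (fun l => y' l).
Proof.
by apply: eq_forallb => l; rewrite mkE /mkv; case: (l == k).
Qed.


Lemma sum_enum (T : finType) (F : T -> C) :
  \sum_(i < #|T|) F (enum_val i) = \sum_(x : T) F x.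
Proof. by rewrite -(big_enum_val (A := T)). Qed.


Definition lift0 (A : 'M[C]_(d k)) : 'M[C]_(hdim d) :=
  \matrix_(j, j') (A ((enum_val j : idx d) k) ((enum_val j' : idx d) k) *
     (agree (fun l => (enum_val j : idx d) l) (fun l => (enum_val j' : idx d) l))%:R).

Lemma liftop_mul (K K' : 'M[C]_(e, d k)) :
  adj (liftop K) *m liftop K' = lift0 (adj K *m K').
Proof.
apply/matrixP => j j'; rewrite !mxE.
set y : idx d := enum_val j; set y' : idx d := enum_val j'.
pose F (x : idx (upd d k e)) := (K (cx x) (y k))^* * K' (cx x) (y' k) *
   ((agree (fun l => x l) (fun l => y l))%:R * (agree (fun l => x l) (fun l => y' l))%:R).
rewrite (eq_bigr (fun i => F (enum_val i))); last first.
  move=> i _; rewrite /F !mxE !prod_agree rmorphM rmorph_nat /cx.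
  by rewrite mulrACA.
rewrite /hdim sum_enum (bigID (fun x : idx (upd d k e) => agree (fun l => x l) (fun l => y l))) /=.
rewrite [X in _ + X]big1 ?addr0; last by move=> x /negbTE hx; rewrite /F hx !mul0r mulr0.
rewrite (reindex_onto (mk y) cx); last by move=> x hx; rewrite mk_cx.
rewrite (eq_bigl xpredT); last by move=> a; rewrite agree_mk cx_mk eqxx andbT;
  apply/forallP => l; apply/implyP.
rewrite mulr_suml; apply: eq_bigr => a _.
rewrite /F cx_mk !agree_mk !mxE.
have -> : agree (fun l => y l) (fun l => y l) by apply/forallP => l; apply/implyP.
by rewrite mul1r.
Qed.


Lemma lift0_sum r (A : 'I_r -> 'M[C]_(d k)) : \sum_i lift0 (A i) = lift0 (\sum_i A i).
Proof.
apply/matrixP => j j'; rewrite summxE !mxE summxE mulr_suml.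
by apply: eq_bigr => i _; rewrite mxE.
Qed.

Lemma lift0_1 : lift0 1%:M = 1%:M.
Proof.
apply/matrixP => j j'; rewrite !mxE -natrM mulnb.
congr (_%:R); congr nat_of_bool.
set y : idx d := enum_val j; set y' : idx d := enum_val j'.
apply/idP/idP.
  move=> /andP [/eqP hk /forallP ha]; apply/eqP; apply: enum_val_inj.
  apply/ffunP => l; apply: val_inj; have [-> | lk] := eqVneq l k; first by rewrite -/y -/y' hk.
  by have := ha l; rewrite lk => /eqP.
move=> /eqP ejj; rewrite /y /y' ejj eqxx /=; by apply/forallP => l; apply/implyP.
Qed.

End Lift.

Lemma liftop_complete (C : numClosedFieldType) m (d : 'I_m -> nat) k e r
  (K : 'I_r -> 'M[C]_(e, d k)) :
  \sum_i adj (K i) *m K i = 1%:M ->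
  \sum_i adj (liftop (K i)) *m liftop (K i) = 1%:M.
Proof.
move=> H; rewrite (eq_bigr _ (fun i _ => liftop_mul (K i) (K i))) lift0_sum H.
exact: lift0_1.
Qed.

Lemma povm_sum (C : numClosedFieldType) m N (d : 'I_m -> nat) (P : prot C N d) :
  valid P -> \sum_o povm P o = 1%:M.
Proof.
elim: P => [d' i | d' k e r K ch IH] /=.
  move=> _; rewrite (bigD1 i) //= eqxx big1 ?addr0 // => o oi.
  by rewrite eq_sym (negbTE oi) /=; apply/matrixP => a b; rewrite !mxE mul0rn.
move=> [hK hch]; rewrite exchange_big /=.
rewrite (eq_bigr (fun i => adj (liftop (K i)) *m liftop (K i))).
  exact: liftop_complete.
by move=> i _; rewrite -mulmx_suml -mulmx_sumr IH // mulmx1.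
Qed.

Lemma supp_hker (C : numClosedFieldType) n (S S' s : 'M[C]_n) :
  supp_eq S s -> supp_eq S' s -> hker S S'.
Proof.
move=> [h1 h2] [h1' _] r H.
have sS : (s <= Defs.support S)%MS by rewrite -(mxrank_leqif_sup h1).2 h2 eqxx.
have := submx_trans h1' sS; rewrite /Defs.support => /submxP [D eD].
have -> : S' = S *m D^T by rewrite -[S']trmxK eD trmx_mul trmxK.
by rewrite mulmxA H mul0mx.
Qed.

Lemma transfer (C : numClosedFieldType) m N (d : 'I_m -> nat) (P : prot C N d)
  (s sigma sigma' : 'I_N -> 'M[C]_(hdim d)) :
  valid P -> pdist P sigma -> inQ s sigma -> inQ s sigma' -> pdist P sigma'.
Proof.
move=> hv hd hq hq' i j.
have [[ps _] hs] := hq j.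
have [[_ tr1] hs'] := hq' j.
have hk := supp_hker hs hs'.
have off : forall o, o != j -> \tr (povm P o *m sigma' j) = 0.
  move=> o oj; apply: (povm_zero (S := sigma j)) => //.
  by rewrite hd (negbTE oj).
case: (eqVneq i j) => [-> | ij]; last by rewrite off.
have E : \tr (sigma' j) = \sum_o \tr (povm P o *m sigma' j).
  by rewrite -tr_sum -mulmx_suml povm_sum // mul1mx.
move: E; rewrite tr1 (bigD1 j) //= big1 ?addr0 => [<- //| o oj].
exact: off.
Qed.

Theorem proposition3 (C : numClosedFieldType) (m : nat) (d : 'I_m -> nat) (N : nat)
  (s : 'I_N -> 'M[C]_(hdim d))
  (s_nz : forall i, s i != 0)
  (s_orth : forall i j, i != j -> s i *m adj (s j) = 0) :
  ((forall sigma, inQ s sigma -> LOCC_dist sigma) \/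
   (forall sigma, inQ s sigma -> ~ LOCC_dist sigma)) /\
  ((forall sigma, inQ s sigma -> LOCC_dist sigma) ->
   exists P : prot C N d, valid P /\ forall sigma, inQ s sigma -> pdist P sigma).
Proof.
split.
  case: (classic (exists sigma, inQ s sigma /\ LOCC_dist sigma)) => [[s0 [hq [P [hv hd]]]] | hn].
    left => sg hsg; exists P; split => //; exact: transfer hv hd hq hsg.
  right => sg hsg hl; apply: hn; exists sg; split.
    exact: hsg.
  exact: hl.
move=> H.
case: (classic (exists sigma, inQ s sigma)) => [[s0 hq] | hn].
  have [P [hv hd]] := H s0 hq.
  exists P; split => // sg hsg; exact: transfer hv hd hq hsg.
case: N s s_nz s_orth H hn => [|N] s _ _ H hn.
  exfalso; apply: hn; exists (fun _ => 0) => i; case: i => //.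
exists (PLeaf C d ord0); split => // sg hsg; exfalso; apply: hn; exists sg; exact: hsg.
Qed.
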